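(* Let $k$ be an integer with $0\leq k\leq n-1$ such that $\gcd(k,n)$ is a power of $2$ (possibly $1$). Then there exists $N\geq 0$ such that $c_k^N\in(e_0)$, the two-sided ideal of $A\#C_n$ generated by $e_0$.
   Context: $\Bbbk$ is an algebraically closed field of characteristic zero, $n\ge 2$, $A=\Bbbk_{-1}[x_0,\dots,x_{n-1}]$ is generated by degree-one $x_0,\dots,x_{n-1}$ with $x_ix_j=-x_jx_i$ ($i\ne j$), $C_n=\langle\sigma\rangle$ acts by $\sigma(x_i)=x_{i+1}$ (indices in $\mathbb{Z}_n$), and $A\#C_n$ is the skew group algebra. Let $\omega$ be a primitive $n$th root of unity, $b_\gamma=\frac1n\sum_{i=0}^{n-1}\omega^{i\gamma}x_i$, $e_\alpha=\frac1n\sum_{i=0}^{n-1}(\omega^\alpha\sigma)^i$, and $c_j=b_kb_{j-k}+b_{j-k}b_k$ (independent of $k$) for $\alpha,\gamma,j\in\mathbb{Z}_n$. In particular $e_0=\frac1n\sum_{g\in C_n}g$. Here $\gcd(0,n)=n$. *)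

(* Defs.v *)
From HB Require Import structures.
From mathcomp Require Import all_boot all_order all_algebra.
Set Implicit Arguments. Unset Strict Implicit. Unset Printing Implicit Defensive.
Import Order.TTheory GRing.Theory Num.Theory.
Local Open Scope ring_scope.

(* Model of the skew group algebra  A # C_n,  A = k_{-1}[x_0,...,x_{n-1}].
   An element is a finite formal sum of terms  c * w * sigma^g  where
   w is a word in the letters x_i (i : 'Z_n) and g : 'Z_n.
   Such a formal sum denotes an element of A # C_n via [coef]: the word w
   equals (-1)^(inv w) x^(monom w) in A (x_i x_j = - x_j x_i for i <> j),
   and {x^m sigma^g} is a k-basis of A # C_n.  Two formal sums denote the
   same element iff their [coef] functions agree ([equiv]). *)
Section SkewGroupAlgebra.
Variables (F : fieldType) (n : nat).

Definition term := (F * seq 'Z_n * 'Z_n)%type.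
Definition elt := seq term.

Definition eadd (s t : elt) : elt := s ++ t.

(* (w sigma^s)(w' sigma^t) = w sigma^s(w') sigma^(s+t), sigma(x_i) = x_(i+1) *)
Definition emul (s t : elt) : elt :=
  [seq (a.1.1 * b.1.1, a.1.2 ++ map (fun i => i + a.2) b.1.2, a.2 + b.2)
  | a <- s, b <- t].

Definition eone : elt := [:: (1, [::], 0)].

Definition epow (s : elt) (N : nat) : elt := iter N (emul s) eone.

Fixpoint inv_word (w : seq 'Z_n) : nat :=
  if w is x :: w' then (count (fun y : 'Z_n => (val y < val x)%N) w' + inv_word w')%N
  else 0%N.

Definition monom (w : seq 'Z_n) : {ffun 'Z_n -> nat} := [ffun i => count_mem i w].

Definition coef (s : elt) (m : {ffun 'Z_n -> nat}) (g : 'Z_n) : F :=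
  \sum_(t <- s | (monom t.1.2 == m) && (t.2 == g)) t.1.1 * (-1) ^+ inv_word t.1.2.

Definition equiv (s t : elt) : Prop := forall m g, coef s m g = coef t m g.

Variable w : F. (* primitive n-th root of unity *)

Definition bb (gamma : 'Z_n) : elt :=
  [seq ((n%:R)^-1 * w ^+ (val i * val gamma), [:: i], 0) | i <- enum 'Z_n].

(* e_alpha = 1/n sum_i (w^alpha sigma)^i *)
Definition ee (alpha : 'Z_n) : elt :=
  [seq ((n%:R)^-1 * w ^+ (val alpha * val i), [::], i) | i <- enum 'Z_n].

(* c_j = b_k b_(j-k) + b_(j-k) b_k, taken with k = 0 *)
Definition cc (j : 'Z_n) : elt := eadd (emul (bb 0) (bb j)) (emul (bb j) (bb 0)).

Definition in_ideal_e0 (s : elt) : Prop :=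
  exists l : seq (elt * elt),
    equiv s (flatten [seq emul (emul p.1 (ee 0)) p.2 | p <- l]).

End SkewGroupAlgebra.

(* Main.v *)
Require Import Defs.
From HB Require Import structures.
From mathcomp Require Import all_boot all_order all_algebra.
From mathcomp Require Import zify ring.
From Stdlib Require Import Setoid Morphisms.
Import GRing.Theory.
Local Open Scope ring_scope.
Set Implicit Arguments. Unset Strict Implicit. Unset Printing Implicit Defensive.

Section Words.
Variable n' : nat.
Local Notation Z := ('Z_(n'.+2)).

Definition lt_of (x : Z) := fun y : Z => (val y < val x)%N.
Definition gt_of (x : Z) := fun y : Z => (val x < val y)%N.

Definition cross (u v : seq Z) : nat := \sum_(x <- u) count (lt_of x) v.

Lemma inv_cat (u v : seq Z) :
  inv_word (u ++ v) = (inv_word u + inv_word v + cross u v)%N.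
Proof.
elim: u => [|x u IH] /=; first by rewrite /cross big_nil addn0.
rewrite IH /cross big_cons count_cat -/(lt_of x); lia.
Qed.

Lemma cross_perml u u' v : perm_eq u u' -> cross u v = cross u' v.
Proof. by move=> H; rewrite /cross (perm_big _ H). Qed.

Lemma cross_permr u v v' : perm_eq v v' -> cross u v = cross u v'.
Proof. by move=> /permP H; rewrite /cross; apply: eq_bigr => x _; rewrite H. Qed.

Lemma inv_mid (u v : seq Z) x :
  inv_word (u ++ x :: v) = (inv_word (u ++ v) + count (gt_of x) u + count (lt_of x) v)%N.
Proof.
elim: u => [|y u IH] /=; first by rewrite addn0 addnC.
rewrite IH !count_cat /= /gt_of /lt_of.
case: ltnP => /= _; lia.
Qed.

Lemma count_ltgt (x : Z) (u : seq Z) :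
  (count (lt_of x) u + count (gt_of x) u)%N = count (predC1 x) u.
Proof.
rewrite -count_predUI.
rewrite (@eq_count _ (predI _ _) pred0); last first.
  by move=> y /=; rewrite /lt_of /gt_of; apply/negP => /andP[]; lia.
rewrite count_pred0 addn0; apply: eq_count => y /=.
rewrite /lt_of /gt_of; apply/idP/idP.
  by case/orP => H; apply/eqP => E; move: H; rewrite E ltnn.
move=> H; have : val y != val x by [].
by rewrite neq_ltn.
Qed.

Lemma inv_map_perm (f : Z -> Z) (w w' : seq Z) : injective f -> perm_eq w w' ->
  odd (inv_word (map f w) + inv_word w) = odd (inv_word (map f w') + inv_word w').
Proof.
move=> finj; elim: w w' => [|x w IH] w' Hp.
  by case: w' Hp => // y s /perm_size.
have Hx : x \in w' by rewrite -(perm_mem Hp) mem_head.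
have [p1 [p2 E]] : exists p1 p2, w' = p1 ++ x :: p2.
  by case/splitPr: Hx => p1 p2; exists p1, p2.
subst w'.
have Hp2 : perm_eq w (p1 ++ p2).
  rewrite -(perm_cons x) (permPl Hp); apply/permPl; exact: (perm_catCA p1 [:: x] p2).
rewrite map_cat /= !inv_mid /=.
have {}IH := IH _ Hp2; rewrite map_cat in IH.
have c1 := count_ltgt x p1.
have c2 := count_ltgt (f x) (map f p1).
have c3 : count (predC1 (f x)) (map f p1) = count (predC1 x) p1.
  by rewrite count_map; apply: eq_count => y /=; rewrite (inj_eq finj).
have c4 : count (lt_of x) w = (count (lt_of x) p1 + count (lt_of x) p2)%N.
  by rewrite -count_cat; apply/permP.
have c5 : count (lt_of (f x)) (map f w) = (count (lt_of (f x)) (map f p1) + count (lt_of (f x)) (map f p2))%N.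
  by rewrite -count_cat -map_cat; apply/permP; apply: perm_map.
rewrite c4 c5.
move: IH; rewrite !oddD => IH.
have E : odd (count (lt_of (f x)) [seq f i | i <- p1]) (+) odd (count (gt_of (f x)) [seq f i | i <- p1])
   = odd (count (lt_of x) p1) (+) odd (count (gt_of x) p1).
  by rewrite -!oddD c1 c2 c3.
move: E IH.
set a := odd (count (lt_of (f x)) _). set b := odd (count (gt_of (f x)) _).
set c := odd (count (lt_of x) p1). set d := odd (count (gt_of x) p1).
set e := odd (count (lt_of (f x)) (map f p2)). set g := odd (count (lt_of x) p2).
set h1 := odd (inv_word _). set h2 := odd (inv_word w).
set h3 := odd (inv_word _). set h4 := odd (inv_word (p1 ++ p2)).
by case: a; case: b; case: c; case: d; case: e; case: g; case: h1; case: h2; case: h3; case: h4.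
Qed.

Lemma monom_perm (u v : seq Z) : (monom u == monom v) = perm_eq u v.
Proof.
apply/eqP/idP => [H|H].
  apply/allP => x _ /=; apply/eqP.
  by move/ffunP: H => /(_ x); rewrite !ffunE.
by apply/ffunP => x; rewrite !ffunE; apply/permP.
Qed.

Definition rep (m : {ffun Z -> nat}) : seq Z := flatten [seq nseq (m i) i | i <- enum Z].

Lemma monom_rep m : monom (rep m) = m.
Proof.
apply/ffunP => x; rewrite ffunE /rep count_flatten -map_comp.
rewrite (@eq_map _ _ _ (fun i => ((i == x) * m i)%N)); last first.
  by move=> i /=; rewrite count_nseq /= eq_sym mulnC.
rewrite sumnE big_map big_enum /= (bigD1 x) //= eqxx mul1n big1 ?addn0 //.
by move=> i /negPf ->.
Qed.

Lemma perm_rep (u : seq Z) : perm_eq u (rep (monom u)).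
Proof. by rewrite -monom_perm monom_rep. Qed.

End Words.

Section Alg.
Variables (F : fieldType) (n' : nat).
Local Notation Z := ('Z_(n'.+2)).
Local Notation E := (elt F n'.+2).
Local Notation tm := (term F n'.+2).
Local Notation eqv := (@Defs.equiv F n'.+2).

Definition sg (u : seq Z) : F := (-1) ^+ inv_word u.

Lemma sg_cat u v : sg (u ++ v) = sg u * sg v * (-1) ^+ cross u v.
Proof. by rewrite /sg inv_cat !exprD. Qed.

Lemma sgK u : sg u * sg u = 1.
Proof. rewrite /sg -exprD -signr_odd oddD addbb; exact: expr0. Qed.

Lemma sg_map_perm (f : Z -> Z) u u' : injective f -> perm_eq u u' ->
  sg (map f u) * sg u = sg (map f u') * sg u'.
Proof. by move=> fi Hp; rewrite /sg -!exprD -[LHS]signr_odd -[RHS]signr_odd (inv_map_perm fi Hp). Qed.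

Definition tvl (t : tm) : F := t.1.1 * sg t.1.2.

Lemma ecoefE (s : E) m g : coef s m g =
  \sum_(t <- s) (if (monom t.1.2 == m) && (t.2 == g) then tvl t else 0).
Proof. by rewrite /coef big_mkcond. Qed.

Lemma ecoef_cat (s t : E) m g : coef (s ++ t) m g = coef s m g + coef t m g.
Proof. by rewrite /coef big_cat. Qed.

Definition mt (a b : tm) : tm :=
  (a.1.1 * b.1.1, a.1.2 ++ map (fun i => i + a.2) b.1.2, a.2 + b.2).

Lemma emulE (s t : E) : emul s t = [seq mt a b | a <- s, b <- t].
Proof. by []. Qed.

Lemma ecoef_emul (s t : E) m g : coef (emul s t) m g =
  \sum_(a <- s) \sum_(b <- t)
     (if (monom (mt a b).1.2 == m) && ((mt a b).2 == g) then tvl (mt a b) else 0).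
Proof. by rewrite ecoefE emulE big_allpairs_dep. Qed.

Lemma group_sum (s : E) (h : {ffun Z -> nat} -> Z -> F) (ks : seq ({ffun Z -> nat} * Z)) :
  uniq ks -> (forall t, t \in s -> (monom t.1.2, t.2) \in ks) ->
  \sum_(t <- s) tvl t * h (monom t.1.2) t.2 = \sum_(k <- ks) coef s k.1 k.2 * h k.1 k.2.
Proof.
move=> uks sub.
under [RHS]eq_bigr => k _ do rewrite ecoefE big_distrl.
rewrite /= exchange_big /=; apply: eq_big_seq => t ts.
transitivity (\sum_(k <- ks | k == (monom t.1.2, t.2)) tvl t * h (monom t.1.2) t.2).
  rewrite big_const_seq count_uniq_mem // sub //=; by rewrite addr0.
rewrite big_mkcond; apply: eq_bigr => -[k1 k2] _ /=.
rewrite xpair_eqE [monom _ == k1]eq_sym [t.2 == k2]eq_sym.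
case: eqP => [->|_]; case: eqP => [->|_] /=; rewrite ?mul0r //.
Qed.

Lemma equiv_sum (s s' : E) h : eqv s s' ->
  \sum_(t <- s) tvl t * h (monom t.1.2) t.2 = \sum_(t <- s') tvl t * h (monom t.1.2) t.2.
Proof.
move=> H; set ks := undup ([seq (monom t.1.2, t.2) | t <- s] ++ [seq (monom t.1.2, t.2) | t <- s']).
rewrite (group_sum h (ks := ks)) ?undup_uniq //; last first.
  by move=> t ts; rewrite mem_undup mem_cat map_f.
rewrite (group_sum h (ks := ks)) ?undup_uniq //; last first.
  by move=> t ts; rewrite mem_undup mem_cat (map_f (fun t : tm => (monom t.1.2, t.2)) ts) orbT.
by apply: eq_bigr => k _; rewrite H.
Qed.

Lemma eqv_refl (s : E) : eqv s s. Proof. by []. Qed.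
Lemma eqv_sym (s t : E) : eqv s t -> eqv t s. Proof. by move=> H m g; rewrite H. Qed.
Lemma eqv_trans (s t u : E) : eqv s t -> eqv t u -> eqv s u.
Proof. by move=> H1 H2 m g; rewrite H1 H2. Qed.

Lemma equiv_cat (s s' t t' : E) : eqv s s' -> eqv t t' -> eqv (s ++ t) (s' ++ t').
Proof. by move=> H1 H2 m g; rewrite !ecoef_cat H1 H2. Qed.

Lemma emul_equivr (s t t' : E) : eqv t t' -> eqv (emul s t) (emul s t').
Proof.
move=> H m g; rewrite !ecoef_emul; apply: eq_bigr => a _.
pose f := fun i : Z => i + a.2.
pose h := fun (m2 : {ffun Z -> nat}) (g2 : Z) =>
  if (monom (a.1.2 ++ map f (rep m2)) == m) && (a.2 + g2 == g)
  then a.1.1 * sg (a.1.2 ++ map f (rep m2)) * sg (rep m2) else 0.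
have fi : injective f by move=> x y; apply: addIr.
have E u : \sum_(b <- u) (if (monom (mt a b).1.2 == m) && ((mt a b).2 == g) then tvl (mt a b) else 0)
   = \sum_(b <- u) tvl b * h (monom b.1.2) b.2.
  apply: eq_bigr => b _; rewrite /h /mt /tvl /=.
  have Hp := perm_rep b.1.2.
  have -> : monom (a.1.2 ++ [seq i + a.2 | i <- b.1.2]) = monom (a.1.2 ++ map f (rep (monom b.1.2))).
    by apply/eqP; rewrite monom_perm perm_cat2l perm_map.
  case: ifP => _; last by rewrite mulr0.
  rewrite !sg_cat (cross_permr _ (perm_map f Hp)).
  have S := sg_map_perm fi Hp.
  have K := sgK b.1.2.
  have -> : sg [seq i + a.2 | i <- b.1.2] = sg (map f (rep (monom b.1.2))) * sg (rep (monom b.1.2)) * sg b.1.2.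
    by rewrite -S -mulrA K mulr1.
  rewrite /f; ring.
by rewrite !E; apply: equiv_sum.
Qed.

Lemma emul_equivl (s s' t : E) : eqv s s' -> eqv (emul s t) (emul s' t).
Proof.
move=> H m g; rewrite !ecoef_emul.
pose h := fun (m1 : {ffun Z -> nat}) (g1 : Z) =>
  \sum_(b <- t) (if (monom (rep m1 ++ map (fun i => i + g1) b.1.2) == m) && (g1 + b.2 == g)
  then b.1.1 * sg (rep m1 ++ map (fun i => i + g1) b.1.2) * sg (rep m1) else 0).
have E u : \sum_(a <- u) \sum_(b <- t) (if (monom (mt a b).1.2 == m) && ((mt a b).2 == g) then tvl (mt a b) else 0)
   = \sum_(a <- u) tvl a * h (monom a.1.2) a.2.
  apply: eq_bigr => a _; rewrite /h mulr_sumr; apply: eq_bigr => b _.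
  rewrite /mt /tvl /=.
  have Hp := perm_rep a.1.2.
  have -> : monom (a.1.2 ++ [seq i + a.2 | i <- b.1.2]) = monom (rep (monom a.1.2) ++ [seq i + a.2 | i <- b.1.2]).
    by apply/eqP; rewrite monom_perm perm_cat2r.
  case: ifP => _; last by rewrite mulr0.
  rewrite !sg_cat (cross_perml _ Hp).
  have K := sgK (rep (monom a.1.2)).
  transitivity (a.1.1 * b.1.1 * sg a.1.2 * sg [seq i + a.2 | i <- b.1.2] *
    (-1) ^+ cross (rep (monom a.1.2)) [seq i + a.2 | i <- b.1.2] * (sg (rep (monom a.1.2)) * sg (rep (monom a.1.2)))).
    by rewrite K mulr1; ring.
  ring.
by rewrite !E; apply: equiv_sum.
Qed.

Lemma emul_equiv (s s' t t' : E) : eqv s s' -> eqv t t' -> eqv (emul s t) (emul s' t').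
Proof. by move=> H1 H2; apply: eqv_trans (emul_equivl _ H1) (emul_equivr _ H2). Qed.

End Alg.

Section Alg3.
Variables (F : fieldType) (n' : nat).
Local Notation Z := ('Z_(n'.+2)).
Local Notation E := (elt F n'.+2).
Local Notation tm := (term F n'.+2).
Local Notation eqv := (@Defs.equiv F n'.+2).

#[local] Instance eqv_Equiv : Equivalence eqv.
Proof. constructor => [x|x y|x y z]; [exact: eqv_refl|exact: eqv_sym|exact: eqv_trans]. Qed.

#[local] Instance emul_Proper : Proper (eqv ==> eqv ==> eqv) (@emul F n'.+2).
Proof. by move=> s s' H t t' H'; apply: emul_equiv. Qed.

#[local] Instance cat_Proper : Proper (eqv ==> eqv ==> eqv) (@cat tm).
Proof. by move=> s s' H t t' H'; apply: equiv_cat. Qed.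

#[local] Instance eadd_Proper : Proper (eqv ==> eqv ==> eqv) (@eadd F n'.+2).
Proof. by move=> s s' H t t' H'; apply: equiv_cat. Qed.

Lemma emul_catl (s s' t : E) : emul (s ++ s') t = emul s t ++ emul s' t.
Proof. by rewrite !emulE allpairs_cat. Qed.

Lemma emul_catr (s t t' : E) : eqv (emul s (t ++ t')) (emul s t ++ emul s t').
Proof.
move=> m g; rewrite ecoef_cat !ecoef_emul -big_split /=.
by apply: eq_bigr => a _; rewrite big_cat.
Qed.

Lemma emul0l (t : E) : emul [::] t = [::]. Proof. by []. Qed.
Lemma emul0r (s : E) : emul s [::] = [::]. Proof. by rewrite emulE allpairs0r. Qed.

Lemma mt_assoc (a b c : tm) : mt (mt a b) c = mt a (mt b c).
Proof.
rewrite /mt /= map_cat -map_comp -catA mulrA addrA; congr (_, _, _).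
congr (_ ++ (_ ++ _)); apply: eq_map => i /=; by rewrite -addrA [a.2 + _]addrC.
Qed.

Lemma mapmt_emul (a : tm) (t u : E) : emul [seq mt a b | b <- t] u = [seq mt a x | x <- emul t u].
Proof.
elim: t => [|b t IHt] //=.
rewrite [emul (_ :: _) u]emulE allpairs_cons -emulE IHt.
rewrite [emul (b :: t) u]emulE allpairs_cons -emulE map_cat -map_comp; congr (_ ++ _).
by apply: eq_map => c /=; rewrite mt_assoc.
Qed.

Lemma emulA (s t u : E) : emul (emul s t) u = emul s (emul t u).
Proof.
elim: s => [|a s IH] //.
rewrite [emul (a :: s) t]emulE allpairs_cons -emulE emul_catl IH mapmt_emul.
by rewrite [emul (a :: s) _]emulE allpairs_cons -!emulE.
Qed.

Lemma emul1l (s : E) : emul (eone F n'.+2) s = s.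
Proof.
rewrite emulE /eone /= cats0 -[RHS]map_id; apply: eq_map => b /=.
rewrite /mt /= mul1r add0r; case: b => [[c u] g] /=; congr (_, _, _).
by rewrite -[RHS]map_id; apply: eq_map => i; rewrite addr0.
Qed.

Lemma emul1r (s : E) : emul s (eone F n'.+2) = s.
Proof.
rewrite emulE /eone allpairs1r -[RHS]map_id; apply: eq_map => b /=.
by rewrite /mt /= mulr1 addr0 cats0; case: b => [[c u] g].
Qed.

Lemma emul_flattenr (s : E) (L : seq E) : eqv (emul s (flatten L)) (flatten (map (emul s) L)).
Proof.
elim: L => [|t L IH] /=; first by rewrite emul0r.
by rewrite emul_catr IH.
Qed.

Lemma emul_flattenl (t : E) (L : seq E) : emul (flatten L) t = flatten (map (fun s => emul s t) L).
Proof. by elim: L => [|s L IH] //=; rewrite emul_catl IH. Qed.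

Variable w : F.
Local Notation I := (@in_ideal_e0 F n'.+2 w).

#[local] Instance ideal_Proper : Proper (eqv ==> iff) I.
Proof.
move=> s s' H; split => -[l Hl]; exists l.
  by rewrite -H.
by rewrite H.
Qed.

Lemma ideal_cat (s t : E) : I s -> I t -> I (s ++ t).
Proof.
move=> [l1 H1] [l2 H2]; exists (l1 ++ l2).
by rewrite map_cat flatten_cat H1 H2.
Qed.

Lemma ideal_nil : I [::].
Proof. by exists [::]. Qed.

Lemma eq_eqv (s t : E) : s = t -> eqv s t.
Proof. by move=> ->; apply: eqv_refl. Qed.

Lemma ideal_mull (p s : E) : I s -> I (emul p s).
Proof.
move=> [l H]; exists [seq (emul p q.1, q.2) | q <- l].
rewrite H emul_flattenr -!map_comp; apply: eq_eqv; congr flatten.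
by apply: eq_map => q /=; rewrite -!emulA.
Qed.

Lemma ideal_mulr (p s : E) : I s -> I (emul s p).
Proof.
move=> [l H]; exists [seq (q.1, emul q.2 p) | q <- l].
rewrite H emul_flattenl -!map_comp; apply: eq_eqv; congr flatten.
by apply: eq_map => q /=; rewrite !emulA.
Qed.

Lemma ideal_gen (p q : E) : I (emul (emul p (ee w 0)) q).
Proof. by exists [:: (p, q)]; rewrite /= cats0. Qed.

Lemma ideal_flatten (L : seq E) : (forall x, x \in L -> I x) -> I (flatten L).
Proof.
elim: L => [|x L IH] H /=; first exact: ideal_nil.
apply: ideal_cat; first by apply: H; rewrite mem_head.
by apply: IH => y yL; apply: H; rewrite in_cons yL orbT.
Qed.

End Alg3.

Section Alg4.
Variables (F : fieldType) (n' : nat).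
Local Notation Z := ('Z_(n'.+2)).
Local Notation E := (elt F n'.+2).
Local Notation tm := (term F n'.+2).
Local Notation eqv := (@Defs.equiv F n'.+2).
Variable w : F.
Hypothesis hw : (n'.+2).-primitive_root w.

Definition Wz (x : Z) := w ^+ val x.
Arguments Wz : simpl never.
Lemma Wmul (x y : Z) : w ^+ (val x * val y) = Wz (x * y).
Proof. by rewrite /Wz -(prim_expr_mod hw). Qed.
Lemma WD (x y : Z) : Wz (x + y) = Wz x * Wz y.
Proof. rewrite /Wz -exprD; exact: (prim_expr_mod hw (val x + val y)). Qed.

Lemma sumZ (G : Z -> F) : \sum_(i <- enum Z) G i = \sum_(i : Z) G i.
Proof. by rewrite big_enum. Qed.
Lemma sumZ' (G : Z -> F) : \sum_(i <- Finite.enum Z) G i = \sum_(i : Z) G i.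
Proof. by rewrite -enumT big_enum. Qed.

Definition cterm m g (t : tm) : F :=
  if (monom t.1.2 == m) && (t.2 == g) then tvl t else 0.

Lemma ecoef_emul_map (f1 f2 : Z -> tm) m g :
  coef (emul (map f1 (enum Z)) (map f2 (enum Z))) m g =
  \sum_(i : Z) \sum_(l : Z) cterm m g (mt (f1 i) (f2 l)).
Proof.
rewrite ecoef_emul big_map sumZ; apply: eq_bigr => i _.
by rewrite big_map sumZ.
Qed.

Lemma eb_comm (a g : Z) : eqv (emul (ee w a) (bb w g)) (emul (bb w g) (ee w (a - g))).
Proof.
move=> m h; rewrite /ee /bb !ecoef_emul_map.
rewrite [RHS]exchange_big; apply: eq_bigr => i _.
rewrite [RHS](reindex_inj (addIr i)); apply: eq_bigr => l _.
rewrite /cterm /mt !Wmul /= addr0 add0r.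
case: ifP => _ //; rewrite /tvl /=; congr (_ * _).
rewrite [LHS]mulrACA [RHS]mulrACA -!WD; congr (_ * Wz _); ring.
Qed.
Lemma ecoef_map (f : Z -> tm) m g :
  coef (map f (enum Z)) m g = \sum_(i : Z) cterm m g (f i).
Proof. by rewrite ecoefE big_map sumZ. Qed.

Definition Y (j : Z) : E :=
  [seq (2%:R * ((n'.+2)%:R^-1 * (n'.+2)%:R^-1 * Wz (i * j)), [:: i; i], 0) | i <- enum Z].

Lemma sgT : (-1) ^+ true = -1 :> F. Proof. exact: expr1. Qed.
Lemma sgF : (-1) ^+ false = 1 :> F. Proof. exact: expr0. Qed.

Lemma c_form (a j : Z) :
  eqv (eadd (emul (bb w a) (bb w (j - a))) (emul (bb w (j - a)) (bb w a))) (Y j).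
Proof.
move=> m h; rewrite /eadd ecoef_cat /bb !ecoef_emul_map /Y ecoef_map.
rewrite [X in _ + X = _]exchange_big -big_split; apply: eq_bigr => i _.
rewrite -big_split (bigD1 i) // big1 ?addr0; last first.
  move=> l nli; rewrite /cterm /mt !Wmul /= !addr0.
  have -> : monom [:: l; i] = monom [:: i; l].
    by apply/eqP; rewrite monom_perm (perm_catC [:: l] [:: i]).
  case: ifP => _; last by rewrite addr0.
  rewrite /tvl /sg /= !addn0.
  have nv : val l != val i by [].
  case: (ltngtP (val l) (val i)) => H; last by rewrite H eqxx in nv.
    rewrite sgT sgF; ring.
  rewrite sgT sgF; ring.
rewrite /cterm /mt !Wmul /= !addr0.
case: ifP => _; last by rewrite addr0.
rewrite /tvl /sg /= !ltnn /= sgF.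
have -> : i * j = i * a + i * (j - a) by ring.
rewrite WD; ring.
Qed.

Lemma sg_xxy (x y : Z) : sg F [:: x; x; y] = 1.
Proof. rewrite /sg /= ltnn /= -signr_odd; case: (_ < _)%N; exact: expr0. Qed.
Lemma sg_yxx (x y : Z) : sg F [:: y; x; x] = 1.
Proof. rewrite /sg /= ltnn /= -signr_odd; case: (_ < _)%N; exact: expr0. Qed.

Lemma Yb_comm (j g : Z) : eqv (emul (Y j) (bb w g)) (emul (bb w g) (Y j)).
Proof.
move=> m h; rewrite /Y /bb !ecoef_emul_map [RHS]exchange_big; apply: eq_bigr => i _.
apply: eq_bigr => l _; rewrite /cterm /mt /= !addr0.
have -> : monom [:: l; i; i] = monom [:: i; i; l].
  by apply/eqP; rewrite monom_perm (perm_catC [:: l] [:: i; i]).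
case: ifP => _ //; rewrite /tvl /= sg_xxy sg_yxx mulrC.
rewrite mul1r mulr1; exact: mulrC.
Qed.

Hypothesis hchar : [pchar F] =i pred0.

Lemma geo_sum (i : Z) : \sum_(a : Z) Wz (a * i) = if i == 0 then (n'.+2)%:R else 0.
Proof.
under eq_bigr => a _ do rewrite -Wmul mulnC exprM.
case: eqP => [->|/eqP ni0].
  under eq_bigr => a _ do rewrite /= expr0 expr1n.
  by rewrite sumr_const card_ord.
set z := w ^+ val i.
have H := subrX1 z n'.+2.
have z1 : z ^+ n'.+2 = 1 by rewrite /z -exprM mulnC exprM (prim_expr_order hw) expr1n.
rewrite z1 subrr in H.
have zn1 : z - 1 != 0.
  rewrite subr_eq0 /z -[X in _ != X](expr0 w) (eq_prim_root_expr hw) mod0n.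
  rewrite modn_small //; exact: ltn_ord.
have : (z - 1) * \sum_(a < n'.+2) z ^+ a == 0 by rewrite -H.
by rewrite mulf_eq0 (negPf zn1) /= => /eqP.
Qed.

Lemma ecoef_flatten (L : seq E) m g : coef (flatten L) m g = \sum_(s <- L) coef s m g.
Proof. by rewrite /coef big_flatten. Qed.

Lemma one_sum : eqv (eone F n'.+2) (flatten [seq ee w a | a <- enum Z]).
Proof.
move=> m h; rewrite ecoef_flatten big_map sumZ.
under eq_bigr => a _ do rewrite /ee ecoef_map.
rewrite exchange_big /=.
have E i : \sum_(a : Z) cterm m h ((n'.+2)%:R^-1 * w ^+ (val a * val i), [::], i)
   = if (monom [::] == m) && (i == h) then (n'.+2)%:R^-1 * (if i == 0 then (n'.+2)%:R else 0) else 0.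
  rewrite /cterm; case: ifP => _; last by rewrite big1.
  rewrite -geo_sum mulr_sumr; apply: eq_bigr => a _.
  by rewrite /tvl Wmul /sg /= mulr1.
under eq_bigr => i _ do rewrite E.
rewrite (bigD1 0) //= big1 ?addr0; last first.
  by move=> i /negPf ->; case: ifP => _ //; rewrite mulr0.
rewrite mulVf; last first.
  by move/pcharf0P: hchar => ->.
rewrite ecoefE big_cons big_nil addr0 /tvl /sg /= mulr1 [0 == h]eq_sym.
by [].
Qed.

End Alg4.

Section Alg5.
Variables (F : fieldType) (n' : nat).
Local Notation Z := ('Z_(n'.+2)).
Local Notation E := (elt F n'.+2).
Local Notation tm := (term F n'.+2).
Local Notation eqv := (@Defs.equiv F n'.+2).
Variable w : F.
Hypothesis hw : (n'.+2).-primitive_root w.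
Local Notation I := (@in_ideal_e0 F n'.+2 w).

#[local] Instance eqv_Equiv5 : Equivalence eqv.
Proof. constructor => [x|x y|x y z]; [exact: eqv_refl|exact: eqv_sym|exact: eqv_trans]. Qed.
#[local] Instance emul_Proper5 : Proper (eqv ==> eqv ==> eqv) (@emul F n'.+2).
Proof. by move=> s s' H t t' H'; apply: emul_equiv. Qed.
#[local] Instance cat_Proper5 : Proper (eqv ==> eqv ==> eqv) (@cat tm).
Proof. by move=> s s' H t t' H'; apply: equiv_cat. Qed.
#[local] Instance eadd_Proper5 : Proper (eqv ==> eqv ==> eqv) (@eadd F n'.+2).
Proof. by move=> s s' H t t' H'; apply: equiv_cat. Qed.
#[local] Instance ideal_Proper5 : Proper (eqv ==> iff) I.
Proof. by move=> s s' H; split => -[l Hl]; exists l; [rewrite -H | rewrite H]. Qed.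

Variable kk : Z.
Local Notation c := (cc w kk).
Local Notation b := (bb w).
Local Notation e := (ee w).

Lemma c_Y : eqv c (Y w kk).
Proof. have := c_form hw 0 kk; rewrite subr0; exact. Qed.

Lemma c_split (g : Z) : eqv c (emul (b (kk - g)) (b g) ++ emul (b g) (b (kk - g))).
Proof.
rewrite c_Y; have := c_form hw (kk - g) kk.
have -> : kk - (kk - g) = g by ring.
by move=> H; rewrite -H.
Qed.

Lemma cb_comm g : eqv (emul c (b g)) (emul (b g) c).
Proof. by rewrite c_Y; apply: Yb_comm. Qed.

Lemma epowS (s : E) m : epow s m.+1 = emul s (epow s m).
Proof. by []. Qed.

Lemma powb_comm m g : eqv (emul (epow c m) (b g)) (emul (b g) (epow c m)).
Proof.
elim: m => [|m IH]; first by rewrite /= emul1l emul1r.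
rewrite epowS emulA IH -emulA cb_comm emulA.
by [].
Qed.

Lemma ec_comm a : eqv (emul (e a) c) (emul c (e (a - kk))).
Proof.
rewrite /cc /eadd emul_catr emul_catl -!emulA eb_comm // subr0.
rewrite [emul (emul (b 0) (e a)) _]emulA eb_comm //.
rewrite [emul (emul (b kk) (e _)) _]emulA eb_comm // subr0 !emulA.
by [].
Qed.
Lemma epow_e m a : eqv (emul (e a) (epow c m)) (emul (epow c m) (e (a - kk *+ m))).
Proof.
elim: m a => [|m IH] a; first by rewrite /= emul1l emul1r mulr0n subr0.
rewrite epowS -emulA ec_comm emulA IH -emulA.
have -> : a - kk - kk *+ m = a - kk *+ m.+1 by rewrite mulrS opprD addrA.
by [].
Qed.

Definition Good m (g : Z) := I (emul (epow c m) (e (- g))).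

Lemma G_mono m g : Good m g -> Good m.+1 g.
Proof. by rewrite /Good epowS emulA; apply: ideal_mull. Qed.

Lemma G_mono' m m' g : (m <= m')%N -> Good m g -> Good m' g.
Proof.
move=> H; rewrite -(subnK H); elim: (m' - m)%N => [|d IH] //= Hg.
by apply: G_mono; apply: IH.
Qed.

Lemma G_base j : Good j (kk *+ j).
Proof.
rewrite /Good -sub0r -epow_e -(emul1l (e 0)); exact: ideal_gen.
Qed.

Lemma G_step m g : Good m (g + g - kk) -> Good m.+1 g.
Proof.
rewrite /Good => H; rewrite epowS.
have PC g' : eqv (emul (epow c m) (b g')) (emul (b g') (epow c m)) := powb_comm m g'.
set P := epow c m in H PC *.
rewrite (c_split g) emul_catl emul_catl; apply: ideal_cat.
  have S1 : eqv (emul (emul (b (kk - g)) (b g)) P) (emul (emul (b (kk - g)) P) (b g)).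
    by rewrite emulA -PC -emulA.
  rewrite S1 emulA.
  have S2 : eqv (emul (b g) (e (- g))) (emul (e 0) (b g)) by rewrite eb_comm // sub0r.
  rewrite S2 -emulA; exact: ideal_gen.
have S1 : eqv (emul (emul (b g) (b (kk - g))) P) (emul (b g) (emul P (b (kk - g)))).
  by rewrite emulA -PC.
rewrite S1 emulA [emul (emul P _) _]emulA.
have S3 : eqv (emul (b (kk - g)) (e (- g))) (emul (e (kk - g - g)) (b (kk - g))).
  rewrite eb_comm //.
  have -> : kk - g - g - (kk - g) = - g by ring.
  by [].
rewrite S3 -[emul P _]emulA; apply: ideal_mull; apply: ideal_mulr.
have -> : kk - g - g = - (g + g - kk) by ring.
exact: H.
Qed.
Lemma claim t : forall g : Z, (exists j, (j < n'.+2)%N /\ g *+ 2 ^ t - kk *+ (2 ^ t).-1 = kk *+ j) ->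
  forall m, (n'.+2 + t <= m)%N -> Good m g.
Proof.
elim: t => [|t IH] g [j [jn Hj]] m Hm.
  rewrite expn0 /= mulr0n subr0 mulr1n in Hj; rewrite Hj.
  apply: (G_mono' (m := j)); last exact: G_base.
  clear -jn Hm; lia.
case: m Hm => [|m] Hm; first by clear -Hm; lia.
apply: G_step; apply: (IH _ _ m); last by clear -Hm; lia.
exists j; split => //; rewrite -Hj.
have [q Hq] : exists q, (2 ^ t)%N = q.+1 by exists (2 ^ t).-1; rewrite prednK // expn_gt0.
rewrite expnS Hq.
have -> : (2 * q.+1).-1 = (q.+1 + q)%N by clear; lia.
rewrite mul2n -addnn !mulrnDr mulrnBl mulrnDl; ring.
Qed.

Hypothesis hchar : [pchar F] =i pred0.

Lemma main_sec (k ex : nat) : gcdn k n'.+2 = (2 ^ ex)%N -> kk = k%:R -> I (epow c (n'.+2 + ex)).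
Proof.
move=> He Hkk.
set P := epow c _.
rewrite -(emul1r P) (one_sum hw hchar) emul_flattenr.
apply: ideal_flatten => x /mapP [y /mapP [a _ ->] ->].
rewrite -(opprK a); apply: (claim (t := ex)); last by [].
have [u _ Hu] := Bezoutr k (ltn0Sn n'.+1).
set p := (2 ^ ex)%N in He *.
have Hz : (p%:R + u%:R * kk = 0 :> Z).
  rewrite Hkk -natrM -natrD -He; apply: val_inj => /=.
  rewrite val_Zp_nat //; exact/eqP.
have Hp : (p%:R : Z) = - (u%:R * kk) by apply/eqP; rewrite -addr_eq0 Hz.
set X : Z := a * u%:R - (p.-1)%:R.
exists (val X); split; first exact: ltn_ord.
have -> : kk *+ val X = kk * X by rewrite -mulr_natr natr_Zp.
have -> : (- a) *+ p = (- a) * p%:R by rewrite mulr_natr.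
have -> : kk *+ p.-1 = kk * (p.-1)%:R by rewrite mulr_natr.
rewrite Hp /X; ring.
Qed.
End Alg5.


Theorem proposition2p3 (F : closedFieldType) (hchar : [pchar F] =i pred0)
  (n : nat) (hn : (1 < n)%N) (w : F) (hw : n.-primitive_root w)
  (k : nat) (hk : (k < n)%N) (hpow : exists e : nat, gcdn k n = (2 ^ e)%N) :
  exists N : nat, in_ideal_e0 w (epow (cc w (k%:R : 'Z_n)) N).
Proof.
case: n hn hw hk hpow => [|[|n']] // hn hw hk [ex He].
exists (n'.+2 + ex)%N.
exact: (main_sec hw hchar He (erefl _)).
Qed.
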